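(* Let $\tau\ge1$, two candidates $P,Q$, and let $Z^*$ be a point of the metric space minimizing $SC$. If $P$ beats $Q$ under Weighted Majority Rule 3 and $\delta_I=SC(P)/SC(Q)>\tau$, then $SC(P)/SC(Z^* )\le\frac{2\delta_I}{\delta_I-\tau}$.
   Context: Voters $N$ and candidates are points of an arbitrary metric space $(X,d)$; $SC(Y)=\sum_{i\in N}d(i,Y)$ for $Y\in X$. Let $A=\{i: d(i,Q)/d(i,P)\ge\tau\}$ and $B=\{j: d(j,P)/d(j,Q)\ge\tau\}$. Weighted Majority Rule 3 selects $P$ over $Q$ iff $|A|\ge|B|$. *)

(* Defs.v *)
From HB Require Import structures.
From mathcomp Require Import all_boot all_order all_algebra.
Set Implicit Arguments. Unset Strict Implicit. Unset Printing Implicit Defensive.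
Import Order.TTheory GRing.Theory Num.Theory.
Local Open Scope ring_scope.

Definition is_metric (R : realFieldType) (X : Type) (d : X -> X -> R) : Prop :=
  [/\ forall x y, 0 <= d x y,
      forall x y, d x y = 0 <-> x = y,
      forall x y, d x y = d y x &
      forall x y z, d x z <= d x y + d y z].

Definition SC (R : realFieldType) (X : Type) (d : X -> X -> R)
  (N : finType) (loc : N -> X) (Y : X) : R :=
  \sum_(i : N) d (loc i) Y.

(* A = { i : d(i,Q)/d(i,P) >= tau }, with the ratio read as +infinity when
   d(i,P) = 0 (cleared denominators). *)
Definition setA (R : realFieldType) (X : Type) (d : X -> X -> R)
  (N : finType) (loc : N -> X) (tau : R) (P Q : X) : {set N} :=
  [set i | tau * d (loc i) P <= d (loc i) Q].

(* Weighted Majority Rule 3 selects P over Q iff |A| >= |B|, where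
   B = { j : d(j,P)/d(j,Q) >= tau } = setA with P and Q swapped. *)
Definition WMR3_selects (R : realFieldType) (X : Type) (d : X -> X -> R)
  (N : finType) (loc : N -> X) (tau : R) (P Q : X) : bool :=
  (#|setA d loc tau Q P| <= #|setA d loc tau P Q|)%N.

(* Main.v *)
Require Import Defs.
From HB Require Import structures.
From mathcomp Require Import all_boot all_order all_algebra.
From mathcomp Require Import lra.
Import Order.TTheory GRing.Theory Num.Theory.
Local Open Scope ring_scope.

Lemma sum_ind (R : realFieldType) (N : finType) (B : {set N}) :
  \sum_(k : N) ((k \in B)%:R : R) = (#|B|%:R).
Proof.
rewrite -sumr_const [RHS]big_mkcond /=; apply: eq_bigr => k _.
by case: (k \in B).
Qed.

Theorem mainTheorem17 (R : realFieldType) (X : Type) (d : X -> X -> R)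
  (N : finType) (loc : N -> X) (tau : R) (P Q Zstar : X) :
  is_metric d ->
  1 <= tau ->
  (forall Y : X, SC d loc Zstar <= SC d loc Y) ->
  WMR3_selects d loc tau P Q ->
  tau < SC d loc P / SC d loc Q ->
  SC d loc P / SC d loc Zstar <=
    2 * (SC d loc P / SC d loc Q) / (SC d loc P / SC d loc Q - tau).
Proof.
move=> [d0 _ dsym dtri] tau1 _ Hw Hlt.
set p := SC d loc P; set q := SC d loc Q; set z := SC d loc Zstar.
have z0 : 0 <= z by apply: sumr_ge0 => i _.
have q0 : 0 <= q by apply: sumr_ge0 => i _.
have qpos : 0 < q.
  rewrite lt0r q0 andbT; apply/negP => /eqP q00.
  by move: Hlt; rewrite -/p -/q q00 invr0 mulr0; lra.
set D := d Zstar P - d Zstar Q.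
set A := setA d loc tau P Q.
set B := setA d loc tau Q P.
have key : p - tau * q <= 2 * z.
  rewrite /p /q /z /SC mulr_sumr -sumrB mulr_sumr.
  have HA : forall k, k \in A -> d (loc k) P - tau * d (loc k) Q <= 0 /\
      D <= 2 * d (loc k) Zstar.
    move=> k; rewrite inE => Hk.
    have := d0 (loc k) P; have := d0 (loc k) Q.
    have := dtri Zstar (loc k) P; have := dtri (loc k) Zstar Q.
    rewrite (dsym Zstar (loc k)) /D => *; split; nra.
  have HB : forall k, k \in B -> d (loc k) P - tau * d (loc k) Q <=
      2 * d (loc k) Zstar + D.
    move=> k; rewrite inE => Hk.
    have := d0 (loc k) P; have := d0 (loc k) Q.
    have := dtri (loc k) Zstar P; have := dtri Zstar (loc k) Q.
    rewrite (dsym Zstar (loc k)) /D => *; nra.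
  have HN : forall k, k \notin B -> d (loc k) P - tau * d (loc k) Q <= 0.
    move=> k; rewrite inE -ltNge => Hk; lra.
  have dz : forall k, 0 <= d (loc k) Zstar by move=> k; apply: d0.
  case: (lerP D 0) => HD.
    apply: ler_sum => k _.
    case: (boolP (k \in B)) => kB.
      have := HB k kB; have := dz k; lra.
    have := HN k kB; have := dz k; lra.
  apply: (@le_trans _ _ (\sum_k (2 * d (loc k) Zstar + D * (k \in B)%:R
                              - D * (k \in A)%:R))).
    apply: ler_sum => k _.
    have := dz k.
    case: (boolP (k \in B)) => kB; case: (boolP (k \in A)) => kA /=.
    - have := HA k kA; lra.
    - have := HB k kB; lra.
    - have := HA k kA; have := HN k kB; lra.
    - have := HN k kB; lra.
  rewrite sumrB big_split /= -!mulr_sumr !sum_ind.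
  have : (#|B|%:R : R) <= #|A|%:R by rewrite ler_nat.
  nra.
set del := p / q.
have dq : del * q = p by rewrite /del divfK // gt_eqF.
have Hlt' : tau < del := Hlt.
have Hdt : 0 < del - tau by lra.
case: (eqVneq z 0) => [->|zn0].
  rewrite invr0 mulr0 divr_ge0 //; lra.
have zpos : 0 < z by rewrite lt0r zn0.
rewrite ler_pdivrMr // mulrAC ler_pdivlMr //.
have : 0 < del by lra.
nra.
Qed.
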